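(* Let $(\Omega,\mathcal{F},\mathbb{P})$ be an atomless probability space, $\mathrm{B}_b$ the space of bounded real-valued measurable functions on $\Omega$, and $H\colon\mathrm{B}_b\to\mathbb{R}$ a law-invariant premium principle, i.e. $H(X)=H(Y)$ whenever $X,Y\in\mathrm{B}_b$ have the same distribution function under $\mathbb{P}$. Then $R_{\mathrm{Max}}(X):=\inf\{H(X_0)\mid X_0\in\mathrm{B}_b,\ X_0\ge X\}$ is law-invariant.
   Context: A premium principle is a map $H\colon\mathrm{B}_b\to\mathbb{R}$ with $H(X+m)=H(X)+m$ for $m\in\mathbb{R}$, $H(0)=0$, and $H(X)\ge0$ for $X\ge0$, where $\le$ is the pointwise order. The distribution function of $X$ is $z\mapsto\mathbb{P}(X\le z)$. *)

(* Defs.v *)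
From HB Require Import structures.
From mathcomp Require Import all_boot all_order all_algebra.
From mathcomp Require Import all_classical all_reals all_analysis.
Set Implicit Arguments. Unset Strict Implicit. Unset Printing Implicit Defensive.
Import Order.TTheory GRing.Theory Num.Theory.
Local Open Scope classical_set_scope.
Local Open Scope ring_scope.

Definition atomless {d : measure_display} {T : measurableType d} {R : realType}
  (P : probability T R) : Prop :=
  forall A : set T, measurable A -> (0 < P A)%E ->
    exists B : set T, [/\ measurable B, B `<=` A, (0 < P B)%E & (P B < P A)%E].

Definition Bb {d : measure_display} {T : measurableType d} {R : realType}
  (X : T -> R) : Prop :=
  measurable_fun setT X /\ exists M : R, forall w, `|X w| <= M.

Definition same_law {d : measure_display} {T : measurableType d} {R : realType}
  (P : probability T R) (X Y : T -> R) : Prop :=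
  forall z : R, P [set w | X w <= z] = P [set w | Y w <= z].

(* Premium principle on B_b (H given on all functions, constrained on B_b) *)
Definition premium_principle {d : measure_display} {T : measurableType d}
  {R : realType} (H : (T -> R) -> R) : Prop :=
  [/\ (forall (X : T -> R) (m : R), Bb X -> H (fun w => X w + m) = H X + m),
      H (fun _ => 0) = 0 &
      (forall X : T -> R, Bb X -> (forall w, 0 <= X w) -> 0 <= H X)].

Definition law_invariant {d : measure_display} {T : measurableType d}
  {R : realType} (P : probability T R) (H : (T -> R) -> R) : Prop :=
  forall X Y : T -> R, Bb X -> Bb Y -> same_law P X Y -> H X = H Y.

Definition R_Max {d : measure_display} {T : measurableType d} {R : realType}
  (H : (T -> R) -> R) (X : T -> R) : \bar R :=
  ereal_inf [set (H X0)%:E | X0 in [set X0 : T -> R | Bb X0 /\ forall w, X w <= X0 w]].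

(* Main.v *)
Require Import Defs.
From HB Require Import structures.
From mathcomp Require Import all_boot all_order all_algebra.
From mathcomp Require Import all_classical all_reals all_analysis.
Import Order.TTheory GRing.Theory Num.Theory.
Local Open Scope classical_set_scope.
Local Open Scope ring_scope.
From mathcomp Require Import ring lra zify.
Import Num.Def.

Section Core.
Variables (d : measure_display) (T : measurableType d) (R : realType)
  (P : probability T R).

Definition p (A : set T) : R := fine (P A).

Lemma PE A : measurable A -> P A = (p A)%:E.
Proof. by move=> mA; rewrite /p fineK // fin_num_measure. Qed.

Lemma p_ge0 A : 0 <= p A.
Proof. by rewrite /p fine_ge0. Qed.

Lemma p_le1 A : measurable A -> p A <= 1.
Proof. by move=> mA; rewrite -lee_fin -PE // probability_le1. Qed.

Lemma p0 : p set0 = 0.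
Proof. by rewrite /p measure0. Qed.

Lemma pT : p setT = 1.
Proof. by rewrite /p probability_setT. Qed.

Lemma p_mono A B : measurable A -> measurable B -> A `<=` B -> p A <= p B.
Proof. by move=> mA mB AB; rewrite -lee_fin -!PE // le_measure // inE. Qed.

Lemma pU A B : measurable A -> measurable B -> A `&` B = set0 ->
  p (A `|` B) = p A + p B.
Proof.
by move=> mA mB AB; apply: EFin_inj; rewrite -PE ?measureU // ?EFinD -?PE //; exact: measurableU.
Qed.

Lemma pD A B : measurable A -> measurable B -> B `<=` A ->
  p (A `\` B) = p A - p B.
Proof.
move=> mA mB BA.
have -> : p A = p (A `\` B) + p B.
  rewrite -pU //; first by rewrite setUC setDUK.
    exact: measurableD.
  by rewrite setDE -setIA setICl setI0.
by rewrite addrK.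
Qed.

Lemma archi (x : R) : exists n : nat, x < n%:R.
Proof.
case: (lerP 0 x) => x0; last by exists 0%N.
by exists (archi_bound x); exact: archi_boundP.
Qed.

Lemma le_inv (x z : R) : (forall n : nat, x <= z + n.+1%:R^-1) -> x <= z.
Proof.
move=> H; rewrite leNgt; apply/negP => zx.
have [n Hn] := archi (x - z)^-1.
have := H n; rewrite -lerBlDl => H2.
have xz0 : 0 < x - z by rewrite subr_gt0.
have : (n.+1%:R)^-1 < x - z.
  rewrite -[x - z]invrK ltf_pV2 ?posrE ?invr_gt0 //.
  by apply: (lt_trans Hn); rewrite ltr_nat.
by rewrite ltNge H2.
Qed.

Lemma dec_ge (F : (set T)^nat) t : (forall n, measurable (F n)) ->
  (forall n m, (n <= m)%N -> F m `<=` F n) ->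
  (forall n, t%:E <= P (F n))%E -> (t%:E <= P (\bigcap_n F n))%E.
Proof.
move=> mF dF tF.
have cv := @nonincreasing_cvg_mu _ _ _ P F (ltac:(by rewrite -ge0_fin_numE ?measure_ge0 // fin_num_measure)) mF (bigcapT_measurable mF)
  (fun n m nm => introT (subsetPset _ _) (dF n m nm)).
rewrite -(cvg_lim _ cv) //; apply: lime_ge; first by apply/cvg_ex; eexists; exact: cv.
by near=> n; exact: tF.
Unshelve. all: by end_near.
Qed.

Lemma inc_le (F : (set T)^nat) t : (forall n, measurable (F n)) ->
  (forall n m, (n <= m)%N -> F n `<=` F m) ->
  (forall n, P (F n) <= t%:E)%E -> (P (\bigcup_n F n) <= t%:E)%E.
Proof.
move=> mF dF tF.
have cv := @nondecreasing_cvg_mu _ _ _ P F mF (ltac:(exact: bigcupT_measurable))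
  (fun n m nm => introT (subsetPset _ _) (dF n m nm)).
rewrite -(cvg_lim _ cv) //; apply: lime_le; first by apply/cvg_ex; eexists; exact: cv.
by near=> n; exact: tF.
Unshelve. all: by end_near.
Qed.


Hypothesis Hal : atomless P.

Lemma small A e : measurable A -> 0 < p A -> 0 < e ->
  exists B, [/\ measurable B, B `<=` A, 0 < p B & p B <= e].
Proof.
move=> mA pA0 e0.
have H : forall n : nat, exists B, [/\ measurable B, B `<=` A, 0 < p B &
    p B * n.+1%:R <= p A].
  elim=> [|n [B [mB BA pB0 pBn]]]; first by exists A; split => //; rewrite mulr1.
  have [C [mC CB PC0 PCB]] : exists C, [/\ measurable C, C `<=` B,
      (0 < P C)%E & (P C < P B)%E].
    by apply: Hal => //; rewrite PE // lte_fin.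
  move: PC0 PCB; rewrite !PE // !lte_fin => pC0 pCB.
  have hn : 0 <= n%:R :> R by [].
  have pBn' : p B * (n%:R + 1) <= p A by rewrite natr1.
  case: (lerP (p C * 2) (p B)) => hC.
    exists C; split => //; first exact: subset_trans CB BA.
    rewrite -natr1 -natr1 -addrA; nra.
  exists (B `\` C); split => //.
  - exact: measurableD.
  - by move=> x [/BA].
  - by rewrite pD // subr_gt0.
  - rewrite pD // -natr1 -natr1 -addrA; nra.
have [n Hn] := archi e^-1.
have [B [mB BA pB0 pBn]] := H n.
exists B; split => //.
have pA1 := p_le1 A mA.
have hn : e^-1 < n.+1%:R by apply: (lt_trans Hn); rewrite ltr_nat.
have : 1 < e * n.+1%:R by rewrite -(ltr_pdivrMl _ _ e0) mulr1.
nra.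
Qed.


Lemma sierp A t : measurable A -> 0 <= t -> t <= p A ->
  exists B, [/\ measurable B, B `<=` A & p B = t].
Proof.
move=> mA t0 tA.
pose cand B D := [/\ measurable D, D `<=` A `\` B & p B + p D <= t].
have step : forall B, exists C, (measurable B -> p B <= t ->
    cand B C /\ forall D, cand B D -> p D / 2 <= p C).
  move=> B; have [mB|nmB] := pselect (measurable B); last first.
    by exists set0.
  case: (lerP (p B) t) => hBt; last by exists set0.
  pose S := [set p D | D in cand B].
  have c0 : cand B set0 by split => //; rewrite p0 addr0.
  have hs : has_sup S.
    split; first by exists 0, set0 => //; rewrite p0.
    by exists 1 => x [D [mD _ _] <-]; exact: p_le1.
  have ub : forall D, cand B D -> p D <= sup S.
    by move=> D cD; apply: sup_upper_bound => //; exists D.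
  case: (ltrP 0 (sup S)) => s0.
    have [e [C cC <-] He] := sup_adherent (divr_gt0 s0 (ltr0Sn _ 1)) hs.
    exists C => _ _; split => // D cD.
    have := ub D cD; lra.
  exists set0 => _ _; split => // D cD; rewrite p0.
  have := ub D cD; lra.
have [f Hf] := choice step.
pose Bs n := iter n (fun B => B `|` f B) set0.
have inv : forall n, [/\ measurable (Bs n), Bs n `<=` A & p (Bs n) <= t].
  elim=> [|n [mB BA pBt]]; first by rewrite /Bs /=; split => //; rewrite p0.
  have [[mC CAB pC] _] := Hf (Bs n) mB pBt.
  rewrite /Bs /= -/(Bs n); split.
  - exact: measurableU.
  - by move=> x [/BA //|/CAB []].
  - rewrite pU //; apply/seteqP; split => x // [Bx /CAB []] //.
have mono : forall n m, (n <= m)%N -> Bs n `<=` Bs m.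
  move=> n m /subnKC <-; elim: (m - n)%N => [|k IH]; first by rewrite addn0.
  by rewrite addnS => x /IH Bx; rewrite /Bs /= -/(Bs _); left.
pose Bu := \bigcup_n Bs n.
have mBu : measurable Bu by apply: bigcupT_measurable => n; case: (inv n).
have BuA : Bu `<=` A by move=> x [n _]; case: (inv n) => _ + _; apply.
have pBu : p Bu <= t.
  rewrite -lee_fin -PE //; apply: inc_le => // [n|n]; first by case: (inv n).
  by case: (inv n) => mB _ pB; rewrite PE // lee_fin.
exists Bu; split => //.
apply/eqP; rewrite eq_le pBu /=; rewrite leNgt; apply/negP => hlt.
have [D [mD DA pD0 pDe]] : exists D, [/\ measurable D, D `<=` A `\` Bu,
    0 < p D & p D <= t - p Bu].
  apply: small; first exact: measurableD.
    by rewrite pD // subr_gt0; apply: lt_le_trans tA.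
  by rewrite subr_gt0.
have big : forall n, p D / 2 <= p (f (Bs n)).
  move=> n; case: (inv n) => mB BA pBt.
  apply: (proj2 (Hf (Bs n) mB pBt)); split => //.
    by move=> x /DA [Ax nBu]; split => // Bx; apply: nBu; exists n.
  have : p (Bs n) <= p Bu by apply: p_mono => // x Bx; exists n.
  lra.
have grow : forall n, n%:R * (p D / 2) <= p (Bs n).
  elim=> [|n IH]; first by rewrite mul0r p_ge0.
  case: (inv n) => mB BA pBt.
  have [[mC CAB pC] _] := Hf (Bs n) mB pBt.
  rewrite /Bs /= -/(Bs n) pU //; last first.
    apply/seteqP; split => x // [Bx /CAB []] //.
  have e : n.+1%:R = n%:R + 1 :> R by rewrite -addn1 natrD.
  have := big n; rewrite e mulrDl mul1r; lra.
have [N HN] := archi (2 / p D).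
have := grow N; have := p_le1 _ (let: And3 x _ _ := inv N in x).
move: HN; rewrite ltr_pdivrMr // => HN.
lra.
Qed.


Lemma half_ex : forall D : set T, exists E, measurable D ->
  [/\ measurable E, E `<=` D & p E = p D / 2].
Proof.
move=> D; have [mD|nmD] := pselect (measurable D); last by exists set0 => /nmD.
have h0 := p_ge0 D.
have h1 : 0 <= p D / 2 by lra.
have h2 : p D / 2 <= p D by lra.
have [E [mE ED pE]] := sierp D (p D / 2) mD h1 h2.
by exists E.
Qed.

Definition half D := projT1 (choice half_ex) D.

Lemma halfP D : measurable D ->
  [/\ measurable (half D), half D `<=` D & p (half D) = p D / 2].
Proof. exact: (projT2 (choice half_ex) D). Qed.

Definition mid A C := A `|` half (C `\` A).

Lemma midP A C : measurable A -> measurable C -> A `<=` C ->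
  [/\ measurable (mid A C), A `<=` mid A C, mid A C `<=` C &
      p (mid A C) = (p A + p C) / 2].
Proof.
move=> mA mC AC.
have mCA : measurable (C `\` A) by exact: measurableD.
have [mH HC pH] := halfP _ mCA.
split.
- exact: measurableU.
- by move=> x Ax; left.
- by move=> x [//|/HC []]; [apply: AC|].
- rewrite /mid pU //; last first.
    by apply/seteqP; split => x // [Ax /HC [_ ]].
  rewrite pH pD //; lra.
Qed.

Lemma midCC C : measurable C -> mid C C = C.
Proof.
move=> mC; apply/seteqP; split => x; last by left.
have [_ HC _] := halfP _ (measurableD mC mC).
by case=> // /HC [].
Qed.


Fixpoint Bd (S : set T) (n k : nat) {struct n} : set T :=
  if n is n'.+1 then
    (if odd k then mid (Bd S n' k./2) (Bd S n' k./2.+1) else Bd S n' k./2)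
  else (if k == 0%N then set0 else S).

Lemma BdE0 S n j : Bd S n.+1 j.*2 = Bd S n j.
Proof. by rewrite /= odd_double half_double. Qed.

Lemma BdE1 S n j : Bd S n.+1 j.*2.+1 = mid (Bd S n j) (Bd S n j.+1).
Proof.
by rewrite /= odd_double /= uphalf_double.
Qed.

Lemma Bd0 S n : Bd S n 0 = set0.
Proof. by elim: n => // n IH; rewrite -[0%N]/(0.*2)%N BdE0. Qed.

Lemma kcase (k : nat) : exists j, k = j.*2 \/ k = j.*2.+1.
Proof.
exists k./2; rewrite -{1 3}(odd_double_half k).
by case: (odd k); [right|left].
Qed.

Lemma Bd_main S : measurable S -> forall n k,
  [/\ measurable (Bd S n k), Bd S n k `<=` S, Bd S n k `<=` Bd S n k.+1,
      ((2 ^ n)%N <= k)%N -> Bd S n k = S &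
      (k <= 2 ^ n)%N -> p (Bd S n k) = k%:R / (2 ^ n)%:R * p S].
Proof.
move=> mS; elim=> [|n IH] k.
  case: k => [|k] /=.
    split; [by []|exact: sub0set|exact: sub0set|by []|by rewrite p0 !mul0r].
  split; [by []|by move=> x|by move=> x|by []|].
  by case: k => // _; rewrite expn0 divr1 mul1r.
have [j [->|->]] := kcase k.
- rewrite BdE0 -[j.*2.+1]/(j.*2.+1) BdE1.
  have [mB BS BB BT Bp] := IH j.
  have [mB' BS' BB' BT' Bp'] := IH j.+1.
  have [mM AM MC pM] := midP _ _ mB mB' BB.
  split => //.
  + by move=> h; apply: BT; move: h; rewrite expnS; lia.
  + move=> h; rewrite Bp; last by move: h; rewrite expnS; lia.
    rewrite expnS natrM -muln2 natrM; field.
    by rewrite pnatr_eq0 expn_eq0.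
- rewrite BdE1 -[j.*2.+2]/((j.+1).*2) BdE0.
  have [mB BS BB BT Bp] := IH j.
  have [mB' BS' BB' BT' Bp'] := IH j.+1.
  have [mM AM MC pM] := midP _ _ mB mB' BB.
  split => //.
  + by apply: subset_trans MC BS'.
  + move=> h; rewrite BT; last by move: h; rewrite expnS; lia.
    by rewrite BT' ?midCC //; move: h; rewrite expnS; lia.
  + move=> h; rewrite pM Bp; last by move: h; rewrite expnS; lia.
    rewrite Bp'; last by move: h; rewrite expnS; lia.
    have e1 : (j.*2.+1)%:R = 2 * j%:R + 1 :> R.
      by rewrite -addn1 natrD -muln2 natrM mulrC.
    have e2 : (j.+1)%:R = j%:R + 1 :> R by rewrite -addn1 natrD.
    rewrite e1 e2 expnS natrM; field.
    by rewrite pnatr_eq0 expn_eq0.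
Qed.


Lemma Bd_scale S n m k : Bd S n k = Bd S (n + m) (k * 2 ^ m).
Proof.
elim: m => [|m IH]; first by rewrite addn0 expn0 muln1.
by rewrite addnS expnS mulnCA mul2n BdE0 -IH.
Qed.

Lemma Bd_mono S : measurable S -> forall n k k', (k <= k')%N -> Bd S n k `<=` Bd S n k'.
Proof.
move=> mS n k k' /subnKC <-; elim: (k' - k)%N => [|i IH]; first by rewrite addn0.
apply: (subset_trans IH); rewrite addnS.
by have [] := Bd_main _ mS n (k + i).
Qed.

Lemma Bd_sub S : measurable S -> forall m j n k, (j * 2 ^ n <= k * 2 ^ m)%N ->
  Bd S m j `<=` Bd S n k.
Proof.
move=> mS m j n k h; rewrite (Bd_scale S m n j) (Bd_scale S n m k) addnC.
exact: Bd_mono.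
Qed.

Lemma q_gt0 m : 0 < (2 ^ m)%:R :> R.
Proof. by rewrite ltr0n expn_gt0. Qed.

Lemma Bd_ple S : measurable S -> forall n k,
  p (Bd S n k) <= k%:R / (2 ^ n)%:R * p S.
Proof.
move=> mS n k; have [_ _ _ BT Bp] := Bd_main _ mS n k.
case: (leqP k (2 ^ n)) => hk; first by rewrite Bp.
rewrite BT; last exact: ltnW.
rewrite -[leLHS]mul1r ler_wpM2r ?p_ge0 // ler_pdivlMr ?q_gt0 // mul1r ler_nat.
exact: ltnW.
Qed.

Definition W S (s : R) := \bigcup_n Bd S n (trunc (s * (2 ^ n)%:R)).

Lemma W_meas S : measurable S -> forall s, measurable (W S s).
Proof.
by move=> mS s; apply: bigcupT_measurable => n; have [] := Bd_main _ mS n (trunc (s * (2 ^ n)%:R)).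
Qed.

Lemma W_sub S : measurable S -> forall s, W S s `<=` S.
Proof.
by move=> mS s x [n _]; have [_ + _ _ _] := Bd_main _ mS n (trunc (s * (2 ^ n)%:R)); apply.
Qed.

Lemma W0 S : W S 0 = set0.
Proof.
by apply/seteqP; split => x // [n _]; rewrite mul0r truncn0 Bd0.
Qed.

Lemma W_mono S : measurable S -> forall s s', s <= s' -> W S s `<=` W S s'.
Proof.
move=> mS s s' ss x [n _ Hx]; exists n => //.
move: x Hx; apply: Bd_mono => //; apply: le_truncn.
by rewrite ler_wpM2r // ltW // q_gt0.
Qed.

Lemma W_p S : measurable S -> forall s, 0 <= s -> s <= 1 -> p (W S s) = s * p S.
Proof.
move=> mS s s0 s1.
pose fl m := trunc (s * (2 ^ m)%:R).
have F1 m : (fl m)%:R <= s * (2 ^ m)%:R.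
  by rewrite truncn_le mulr_ge0 // ltW // q_gt0.
have F2 m : s * (2 ^ m)%:R < (fl m).+1%:R by exact: truncnS_gt.
have F3 m : (fl m <= 2 ^ m)%N.
  rewrite -[X in (_ <= X)%N](@natrK R); apply: le_truncn.
  by rewrite -[leRHS]mul1r ler_wpM2r // ltW // q_gt0.
have mW := W_meas _ mS s.
have pS0 := p_ge0 S; have pS1 := p_le1 _ mS.
have Hq m : (2 ^ m)%:R^-1 <= m.+1%:R^-1 :> R.
  by rewrite lef_pV2 ?posrE ?q_gt0 // ler_nat ltn_expl.
have low m : s * p S <= p (W S s) + m.+1%:R^-1.
  have [_ _ _ _ Bp] := Bd_main _ mS m (fl m).
  have : p (Bd S m (fl m)) <= p (W S s).
    apply: p_mono => //; first by have [] := Bd_main _ mS m (fl m).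
    by move=> x Hx; exists m.
  rewrite Bp // => h.
  have hq := q_gt0 m; have hm := Hq m.
  set q := (2 ^ m)%:R : R in hq hm h F1 F2 Bp.
  have e : (fl m).+1%:R = (fl m)%:R + 1 :> R by rewrite -addn1 natrD.
  have F2' := F2 m; rewrite e in F2'.
  have iq : q * q^-1 = 1 by rewrite mulfV // gt_eqF.
  have : s - q^-1 <= (fl m)%:R / q.
    rewrite ler_pdivlMr // mulrBl mulVf ?gt_eqF //; lra.
  move=> X.
  have t1 : (s - q^-1) * p S <= (fl m)%:R / q * p S by rewrite ler_wpM2r.
  have t2 : q^-1 * p S <= q^-1 by rewrite ler_piMr // ltW // invr_gt0.
  apply: (le_trans (y := (fl m)%:R / q * p S + q^-1)); last exact: lerD.
  by have := lerD t1 t2; rewrite -mulrDl subrK.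
have up m : p (W S s) <= s * p S + m.+1%:R^-1.
  have sub : W S s `<=` Bd S m (fl m).+1.
    move=> x [n _]; apply: Bd_sub => //.
    apply: ltnW; rewrite -(ltr_nat R) !natrM.
    apply: (le_lt_trans (y := s * (2 ^ n)%:R * (2 ^ m)%:R)).
      by apply: ler_wpM2r; [exact: ler0n | exact: F1].
    by rewrite mulrAC ltr_pM2r ?q_gt0 //; exact: F2.
  have h1 : p (W S s) <= p (Bd S m (fl m).+1).
    by apply: p_mono => //; have [] := Bd_main _ mS m (fl m).+1.
  have h2 := Bd_ple _ mS m (fl m).+1.
  have hq := q_gt0 m; have hm := Hq m.
  set q := (2 ^ m)%:R : R in hq hm h2 F1 F2.
  have e : (fl m).+1%:R = (fl m)%:R + 1 :> R by rewrite -addn1 natrD.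
  rewrite e in h2.
  have : ((fl m)%:R + 1) / q <= s + q^-1.
    rewrite ler_pdivrMr // mulrDl mulVf ?gt_eqF //; have := F1 m; lra.
  move=> X.
  have t1 : ((fl m)%:R + 1) / q * p S <= (s + q^-1) * p S by rewrite ler_wpM2r.
  have t2 : q^-1 * p S <= q^-1 by rewrite ler_piMr // ltW // invr_gt0.
  apply: (le_trans h1); apply: (le_trans h2).
  apply: (le_trans t1); rewrite mulrDl lerD2l; exact: le_trans t2 hm.
apply/eqP; rewrite eq_le; apply/andP; split; apply: le_inv => m.
  exact: up.
exact: low.
Qed.


Lemma mle (Y : T -> R) y : measurable_fun setT Y -> measurable [set w | Y w <= y].
Proof.
move=> mY; have := mY measurableT _ (measurable_itv `]-oo, y]); rewrite setTI.
by congr measurable; apply/seteqP; split => w /=; rewrite in_itv /=.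
Qed.

Lemma mlt (Y : T -> R) y : measurable_fun setT Y -> measurable [set w | Y w < y].
Proof.
move=> mY; have := mY measurableT _ (measurable_itv `]-oo, y[); rewrite setTI.
by congr measurable; apply/seteqP; split => w /=; rewrite in_itv /=.
Qed.

Lemma eq_lt_le (Y : T -> R) y :
  [set w | Y w = y] = [set w | Y w <= y] `\` [set w | Y w < y].
Proof.
apply/seteqP; split => w /=.
  by move=> ->; split => //; rewrite ltxx.
by move=> [h1 /negP]; rewrite -leNgt => h2; apply/eqP; rewrite eq_le h1.
Qed.

Lemma meq (Y : T -> R) y : measurable_fun setT Y -> measurable [set w | Y w = y].
Proof. by move=> mY; rewrite eq_lt_le; apply: measurableD; [exact: mle|exact: mlt]. Qed.

Lemma p_le_split (Y : T -> R) y : measurable_fun setT Y ->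
  p [set w | Y w <= y] = p [set w | Y w < y] + p [set w | Y w = y].
Proof.
move=> mY; rewrite eq_lt_le pD ?subrKC //; [exact: mle|exact: mlt|].
by move=> w /= /ltW.
Qed.

Lemma inv_pos (n : nat) : 0 < n.+1%:R^-1 :> R.
Proof. by rewrite invr_gt0 ltr0Sn. Qed.

Lemma inv_anti (n m : nat) : (n <= m)%N -> m.+1%:R^-1 <= n.+1%:R^-1 :> R.
Proof. by move=> nm; rewrite lef_pV2 ?posrE ?ltr0Sn // ler_nat. Qed.

Section Quantile.
Variables (Y : T -> R) (M : R).
Hypothesis mY : measurable_fun setT Y.
Hypothesis hM : forall w, `|Y w| <= M.

Definition Fy y := p [set w | Y w <= y].


Lemma Yge w : - M <= Y w.
Proof. by have := hM w; rewrite ler_norml => /andP[]. Qed.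

Lemma Yle w : Y w <= M.
Proof. by have := hM w; rewrite ler_norml => /andP[]. Qed.

Lemma Fy_mono y y' : y <= y' -> Fy y <= Fy y'.
Proof.
by move=> yy; apply: p_mono; [exact: mle|exact: mle|move=> w /= h; exact: le_trans yy].
Qed.

Definition Eq t := [set y | - M <= y /\ t <= Fy y].
Definition yq t := inf (Eq t).

Lemma FyM : Fy M = 1.
Proof.
rewrite /Fy -pT; congr p; apply/seteqP; split => w //= _; exact: Yle.
Qed.

Lemma Eq_ne t : t <= 1 -> - M <= M -> Eq t !=set0.
Proof. by move=> t1 MM; exists M; split => //; rewrite FyM. Qed.

Lemma Eq_lb t : has_lbound (Eq t).
Proof. by exists (- M) => y []. Qed.

Lemma yq_le t z : - M <= z -> t <= Fy z -> yq t <= z.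
Proof. by move=> h1 h2; apply: ge_inf; [exact: Eq_lb|split]. Qed.

Lemma yq_ge t : t <= 1 -> - M <= M -> - M <= yq t.
Proof. by move=> t1 MM; apply: lb_le_inf; [exact: Eq_ne|move=> y []]. Qed.

Lemma yq_mono t t' : t <= t' -> t' <= 1 -> - M <= M -> yq t <= yq t'.
Proof.
move=> tt t1 MM; apply: lb_le_inf; first exact: Eq_ne.
move=> y [h1 h2]; apply: yq_le => //; exact: le_trans h2.
Qed.

Lemma Q2 t : t <= 1 -> - M <= M -> t <= Fy (yq t).
Proof.
move=> t1 MM.
pose F n := [set w | Y w <= yq t + n.+1%:R^-1].
rewrite /Fy; have -> : [set w | Y w <= yq t] = \bigcap_n F n.
  apply/seteqP; split => w /=.
    move=> h n _; rewrite /F /=; apply: (le_trans h).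
    by rewrite lerDl ltW // inv_pos.
  move=> h; apply: le_inv => n; exact: h.
rewrite -lee_fin -PE; last by apply: bigcapT_measurable => n; exact: mle.
apply: dec_ge.
- by move=> n; exact: mle.
- move=> n m nm w; rewrite /F /= => h; apply: (le_trans h).
  by rewrite lerD2l inv_anti.
- move=> n; rewrite PE ?lee_fin; last exact: mle.
  have hlt : yq t < yq t + n.+1%:R^-1 by rewrite ltrDl inv_pos.
  have [y [Ey1 Ey2] hy] := inf_lt (Eq_ne t t1 MM) hlt.
  by apply: (le_trans Ey2); apply: Fy_mono; exact: ltW.
Qed.

Lemma Q3 t : 0 <= t -> t <= 1 -> - M <= M -> p [set w | Y w < yq t] <= t.
Proof.
move=> t0 t1 MM.
pose F n := [set w | Y w <= yq t - n.+1%:R^-1].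
have -> : [set w | Y w < yq t] = \bigcup_n F n.
  apply/seteqP; split => w /=; last first.
    move=> [n _]; rewrite /F /= => h; apply: (le_lt_trans h).
    by rewrite ltrBlDr ltrDl inv_pos.
  move=> h; apply: contrapT => nex.
  have : yq t <= Y w.
    apply: le_inv => n; rewrite leNgt; apply/negP => h2; apply: nex.
    by exists n => //; rewrite /F /= lerBrDr ltW.
  by rewrite leNgt h.
rewrite -lee_fin -PE; last by apply: bigcupT_measurable => n; exact: mle.
apply: inc_le.
- by move=> n; exact: mle.
- move=> n m nm w; rewrite /F /= => h; apply: (le_trans h).
  by rewrite lerD2l lerN2 inv_anti.
- move=> n; rewrite PE ?lee_fin; last exact: mle.
  case: (ltrP (yq t - n.+1%:R^-1) (- M)) => hc.
    have -> : F n = set0.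
      apply/seteqP; split => w // h; have := Yge w; rewrite leNgt.
      by rewrite (le_lt_trans h hc).
    by rewrite p0.
  rewrite leNgt; apply/negP => h.
  have : yq t <= yq t - n.+1%:R^-1 by apply: yq_le => //; exact: ltW.
  by rewrite leNgt ltrBlDr ltrDl inv_pos.
Qed.

Definition sq t := (t - p [set w | Y w < yq t]) / p [set w | Y w = yq t].
Definition L t := [set w | Y w < yq t] `|` W [set w | Y w = yq t] (sq t).

Lemma sq_props t : 0 <= t -> t <= 1 -> - M <= M ->
  [/\ 0 <= sq t, sq t <= 1 & p [set w | Y w < yq t] + sq t * p [set w | Y w = yq t] = t].
Proof.
move=> t0 t1 MM.
have h2 := Q2 _ t1 MM; have h3 := Q3 _ t0 t1 MM.
rewrite /Fy (p_le_split _ _ mY) in h2.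
have b0 := p_ge0 [set w | Y w = yq t].
rewrite /sq; case: (eqVneq (p [set w | Y w = yq t]) 0) => hb.
  rewrite hb invr0 mulr0 mul0r addr0; split => //; rewrite hb addr0 in h2.
  by apply/eqP; rewrite eq_le h3 h2.
have bp : 0 < p [set w | Y w = yq t] by rewrite lt_neqAle eq_sym hb b0.
split.
- by rewrite divr_ge0 // subr_ge0.
- by rewrite ler_pdivrMr // mul1r lerBlDl.
- by rewrite divfK // addrC subrK.
Qed.

Lemma mL t : measurable (L t).
Proof. by apply: measurableU; [exact: mlt|apply: W_meas; exact: meq]. Qed.

Lemma pL t : 0 <= t -> t <= 1 -> - M <= M -> p (L t) = t.
Proof.
move=> t0 t1 MM; have [s0 s1 hs] := sq_props _ t0 t1 MM.
rewrite /L pU; [|exact: mlt|apply: W_meas; exact: meq|].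
  by rewrite W_p //; exact: meq.
apply/seteqP; split => w // [/= h1 /(W_sub _ (meq _ _ mY) _) /= h2].
by move: h1; rewrite h2 ltxx.
Qed.

Lemma L_sub t : L t `<=` [set w | Y w <= yq t].
Proof.
by move=> w [/= /ltW //|/(W_sub _ (meq _ _ mY) _) /= ->].
Qed.

Lemma L_mono t t' : 0 <= t -> t <= t' -> t' <= 1 -> - M <= M -> L t `<=` L t'.
Proof.
move=> t0 tt t1 MM.
have := yq_mono _ _ tt t1 MM; rewrite le_eqVlt => /orP[/eqP e|lt].
  rewrite /L e; apply: setUS; apply: W_mono; first exact: meq.
  rewrite /sq e ler_wpM2r ?invr_ge0 ?p_ge0 // lerD2r //.
move=> w /L_sub /= h; left => /=; exact: le_lt_trans lt.
Qed.

Section Zcons.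
Variable X0 : T -> R.
Hypothesis mX0 : measurable_fun setT X0.
Hypothesis hM0 : forall w, `|X0 w| <= M.
Hypothesis MM : - M <= M.
Hypothesis hGF : forall z, p [set w | X0 w <= z] <= Fy z.

Definition G z := p [set w | X0 w <= z].

Lemma G01 z : 0 <= G z /\ G z <= 1.
Proof. by split; [exact: p_ge0|apply: p_le1; exact: mle]. Qed.

Lemma G_mono z z' : z <= z' -> G z <= G z'.
Proof.
by move=> zz; apply: p_mono; [exact: mle|exact: mle|move=> w /= h; exact: le_trans zz].
Qed.

Definition C z := if z < - M then set0 else if M <= z then setT else L (G z).

Lemma mC z : measurable (C z).
Proof. by rewrite /C; case: ifP => _ //; case: ifP => _ //; exact: mL. Qed.

Lemma C_mono z z' : z <= z' -> C z `<=` C z'.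
Proof.
move=> zz; rewrite /C; case: ifPn => [_|h1]; first exact: sub0set.
rewrite -leNgt in h1.
have -> : (z' < - M) = false by apply/negbTE; rewrite -leNgt; exact: le_trans zz.
case: ifPn => [h2|h2].
  by have -> : M <= z' by exact: le_trans zz.
case: ifPn => [h3|h3] //; apply: L_mono => //.
- by case: (G01 z).
- exact: G_mono.
- by case: (G01 z').
Qed.

Lemma pC z : p (C z) = G z.
Proof.
rewrite /C /G; case: ifPn => h1.
  suff -> : [set w | X0 w <= z] = set0 by [].
  apply/seteqP; split => w // /= h.
  have := hM0 w; rewrite ler_norml => /andP[+ _].
  by rewrite leNgt (le_lt_trans h h1).
case: ifPn => h2.
  suff -> : [set w | X0 w <= z] = setT by [].
  apply/seteqP; split => w // _ /=.
  have := hM0 w; rewrite ler_norml => /andP[_ +] => h; exact: le_trans h h2.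
by apply: pL => //; case: (G01 z).
Qed.

Lemma C_sub z : C z `<=` [set w | Y w <= z].
Proof.
rewrite /C; case: ifPn => [_|h1] //; rewrite -leNgt in h1.
case: ifPn => [h2|h2]; first by move=> w _ /=; exact: le_trans (Yle w) h2.
move=> w /L_sub /= h; apply: (le_trans h); apply: yq_le => //.
exact: hGF.
Qed.

Definition Z w := inf [set z | C z w].

Lemma Zset_ne w : [set z | C z w] !=set0.
Proof. by exists M; rewrite /= /C ltNge MM /= lexx. Qed.

Lemma Zset_lb' w : lbound [set z | C z w] (- M).
Proof. by move=> z /=; rewrite /C; case: ifPn => [h //|h _]; rewrite -leNgt in h. Qed.

Lemma Zset_lb w : has_lbound [set z | C z w].
Proof. by exists (- M); exact: Zset_lb'. Qed.

Lemma CM w : C M w.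
Proof. by rewrite /C ltNge MM /= lexx. Qed.

Lemma Z_ge w : Y w <= Z w.
Proof. by apply: lb_le_inf; [exact: Zset_ne|move=> z /C_sub]. Qed.

Lemma Z_bound w : `|Z w| <= M.
Proof.
rewrite ler_norml; apply/andP; split.
  by apply: lb_le_inf; [exact: Zset_ne|exact: Zset_lb'].
by apply: ge_inf; [exact: Zset_lb|exact: CM].
Qed.

Lemma Zle z : [set w | Z w <= z] = \bigcap_n C (z + n.+1%:R^-1).
Proof.
apply/seteqP; split => w /=.
  move=> h n _.
  have hlt : Z w < z + n.+1%:R^-1 by apply: le_lt_trans h _; rewrite ltrDl inv_pos.
  have [y /= Cy hy] := inf_lt (Zset_ne w) hlt.
  by move: Cy; apply: C_mono; exact: ltW.
move=> h; apply: le_inv => n.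
by apply: ge_inf; [exact: Zset_lb|exact: h].
Qed.

Lemma mZle z : measurable [set w | Z w <= z].
Proof. by rewrite Zle; apply: bigcapT_measurable => n; exact: mC. Qed.

Lemma mZ : measurable_fun setT Z.
Proof.
apply: (measurability _ (measurable_realfun.RGenOInfty.measurableE R)).
move=> A [B [x ->] <-].
have -> : setT `&` Z @^-1` `]x, +oo[ = ~` [set w | Z w <= x].
  apply/seteqP; split => w /=; rewrite in_itv /= andbT; [move=> [_ h1] h2|move=> h1; split => //].
    by move: h1; rewrite ltNge h2.
  by rewrite ltNge; apply/negP.
exact/measurableC/mZle.
Qed.

Lemma X0le z : [set w | X0 w <= z] = \bigcap_n [set w | X0 w <= z + n.+1%:R^-1].
Proof.
apply/seteqP; split => w /=.
  by move=> h n _ /=; apply: (le_trans h); rewrite lerDl ltW // inv_pos.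
by move=> h; apply: le_inv => n; exact: h.
Qed.

Lemma dec_le1 (F F' : (set T)^nat) : (forall n, measurable (F n)) ->
  (forall n, measurable (F' n)) ->
  (forall n m, (n <= m)%N -> F' m `<=` F' n) ->
  (forall n, P (F n) = P (F' n)) ->
  (P (\bigcap_n F n) <= P (\bigcap_n F' n))%E.
Proof.
move=> mF mF' dF' e.
have mI : measurable (\bigcap_n F n) by exact: bigcapT_measurable.
rewrite (PE _ mI); apply: dec_ge => // n.
rewrite -e PE // lee_fin; apply: p_mono => //.
by move=> w; apply.
Qed.

Lemma Z_law z : P [set w | Z w <= z] = P [set w | X0 w <= z].
Proof.
have e : forall n, P (C (z + n.+1%:R^-1)) = P [set w | X0 w <= z + n.+1%:R^-1].
  by move=> n; rewrite !PE ?pC //; [exact: mle|exact: mC].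
have mF n : measurable (C (z + n.+1%:R^-1)) by exact: mC.
have mF' n : measurable [set w | X0 w <= z + n.+1%:R^-1] by exact: mle.
rewrite Zle X0le; apply/eqP; rewrite eq_le; apply/andP; split.
  apply: dec_le1 => // n m nm w /= h; apply: (le_trans h).
  by rewrite lerD2l inv_anti.
apply: dec_le1 => // n m nm.
by apply: C_mono; rewrite lerD2l inv_anti.
Qed.

Lemma core_Z : exists Z', [/\ Bb Z', forall w, Y w <= Z' w & same_law P Z' X0].
Proof.
exists Z; split.
- by split; [exact: mZ|exists M; exact: Z_bound].
- exact: Z_ge.
- move=> z; exact: Z_law.
Qed.

End Zcons.

End Quantile.


End Core.

Lemma sub_dir (d : measure_display) (T : measurableType d) (R : realType)
  (P : probability T R) (H : (T -> R) -> R) :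
  atomless P -> law_invariant P H ->
  forall X Y : T -> R, Bb X -> Bb Y -> same_law P X Y ->
  [set (H X0)%:E | X0 in [set X0 : T -> R | Bb X0 /\ forall w, X w <= X0 w]] `<=`
  [set (H X0)%:E | X0 in [set X0 : T -> R | Bb X0 /\ forall w, Y w <= X0 w]].
Proof.
move=> hal linv X Y bX [mY [MY hMY]] sXY _ [X0 [bX0 hX] <-].
have [mX0 [M0 hM0]] := bX0.
pose M := `|MY| + `|M0|.
have hY : forall w, `|Y w| <= M.
  by move=> w; apply: (le_trans (hMY w)); apply: (le_trans (ler_norm MY)); rewrite lerDl.
have hX0 : forall w, `|X0 w| <= M.
  by move=> w; apply: (le_trans (hM0 w)); apply: (le_trans (ler_norm M0)); rewrite lerDr.
have M0' : 0 <= M by rewrite addr_ge0.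
have MM : - M <= M by lra.
have hGF : forall z, p _ _ _ P [set w | X0 w <= z] <= Fy _ _ _ P Y z.
  move=> z; rewrite /Fy.
  have -> : p _ _ _ P [set w | Y w <= z] = p _ _ _ P [set w | X w <= z] by rewrite /p sXY.
  apply: p_mono; [exact: mle|case: bX => mX _; exact: mle|].
  by move=> w /= h; apply: le_trans h.
have [Z' [bZ YZ sZ]] := core_Z _ _ _ P hal Y M mY hY X0 mX0 hX0 MM hGF.
exists Z' => //; congr (_%:E); apply: linv => //.
Qed.

Theorem proposition4p3 (d : measure_display) (T : measurableType d) (R : realType)
  (P : probability T R) (H : (T -> R) -> R) :
  atomless P -> premium_principle H -> law_invariant P H ->
  forall X Y : T -> R, Bb X -> Bb Y -> same_law P X Y -> R_Max H X = R_Max H Y.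
Proof.
move=> hal _ linv X Y bX bY sXY; rewrite /R_Max; congr ereal_inf.
apply/seteqP; split; first exact: (@sub_dir _ _ _ P H hal linv X Y bX bY sXY).
by apply: (@sub_dir _ _ _ P H hal linv Y X bY bX) => z; rewrite sXY.
Qed.
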